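(* Let $V=\{1,\dots,n\}$, let $(\bar\Omega,\mathcal F,\mathbb P)$ be a probability space, and let $\sigma:\{0,1\}^n\times\bar\Omega\to\mathbb R$ be such that for every $\omega\in\bar\Omega$ the set function $X\mapsto\sigma(X,\omega)$ (identifying $X\subseteq V$ with its characteristic vector $x\in\{0,1\}^n$) is nondecreasing and submodular, and for each $x$ the random variable $\sigma(x)=\sigma(x,\cdot)$ is integrable. Let $\mathcal X\subseteq\{0,1\}^n$ and $\alpha\in(0,1]$. Let $\bar x\in\mathcal X$ with support $\bar X=\{j\in V:\bar x_j=1\}$, let $r=|V\setminus\bar X|$ and let $j_1,\dots,j_r$ be any ordering of $V\setminus\bar X$. For $i=1,\dots,r$ define $\bar x^{j_i}=\mathbf 1-\sum_{l=i+1}^{r}\mathbf e_{j_l}$ and $\bar\delta_{j_i}(\bar x)=\mathrm{CVaR}_\alpha(\sigma(\bar x^{j_i}))-\mathrm{CVaR}_\alpha(\sigma(\bar x))$. Then for every $x\in\mathcal X$ and every $\psi\in\mathbb R$ with $\psi\le\mathrm{CVaR}_\alpha(\sigma(x))$, $$\psi\le \mathrm{CVaR}_\alpha(\sigma(\bar x))+\sum_{i=1}^r\bar\delta_{j_i}(\bar x)\,x_{j_i}.$$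
   Context: For a random variable $Y$ with finite expectation and $\alpha\in(0,1]$, $\mathrm{CVaR}_\alpha(Y)=\max_{\eta\in\mathbb R}\{\eta-\frac1\alpha\mathbb E([\eta-Y]_+)\}$, where $[z]_+=\max(z,0)$. $\mathbf e_j$ is the $j$-th unit vector in $\mathbb R^n$ and $\mathbf 1$ is the all-ones vector in $\mathbb R^n$. *)

(* Defs.v *)
From HB Require Import structures.
From mathcomp Require Import all_boot all_order all_algebra.
From mathcomp Require Import all_classical all_reals all_analysis.
Set Implicit Arguments. Unset Strict Implicit. Unset Printing Implicit Defensive.
Import Order.TTheory GRing.Theory Num.Theory.
Local Open Scope classical_set_scope.
Local Open Scope ring_scope.

(* CVaR_alpha(Y) = sup_{eta in R} { eta - (1/alpha) E[(eta - Y)_+] }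
   (the paper writes max; the sup is attained for integrable Y). *)
Definition CVaR d (T : measurableType d) (R : realType) (P : probability T R)
  (alpha : R) (Y : T -> R) : \bar R :=
  ereal_sup [set (eta%:E - (alpha^-1)%:E *
                  (\int[P]_w (Num.max (eta - Y w) 0)%:E))%E | eta in [set: R]].

Definition xbar_up (n r : nat) (j : 'I_r -> 'I_n) (i : 'I_r) : {set 'I_n} :=
  [set: 'I_n] :\: [set j l | l in [set l : 'I_r | (i < l)%N]].

(* Main.v *)
Require Import Defs.
From HB Require Import structures.
From mathcomp Require Import all_boot all_order all_algebra.
From mathcomp Require Import all_classical all_reals all_analysis.
From mathcomp Require Import measurable_realfun.
From mathcomp Require Import ring lra.
Import Order.TTheory GRing.Theory Num.Theory.
Local Open Scope classical_set_scope.
Local Open Scope ring_scope.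

Section Aux.
Variables (d : measure_display) (T : measurableType d) (R : realType)
  (P : probability T R).

Lemma mes_g {Y : T -> R} (eta : R) : measurable_fun setT Y ->
  measurable_fun setT (fun w => @EFin R (Num.max (eta - Y w) 0)).
Proof.
move=> mY; apply/measurable_EFinP.
apply: (@measurable_maxr _ _ _ _ (fun w => eta - Y w) (fun _ => 0)).
  exact: measurable_funB.
exact: measurable_cst.
Qed.

Lemma mes_p {Y : T -> R} : measurable_fun setT Y ->
  measurable_fun setT (fun w => @EFin R (Num.max (Y w) 0)).
Proof.
move=> mY; apply/measurable_EFinP.
apply: (@measurable_maxr _ _ _ _ Y (fun _ => 0)) => //.
Qed.

Lemma mes_pr {Y : T -> R} : measurable_fun setT Y ->
  measurable_fun setT (fun w => Num.max (Y w) 0).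
Proof. by move=> mY; apply/measurable_EFinP; exact: mes_p. Qed.

Lemma mes_gr {Y : T -> R} eta : measurable_fun setT Y ->
  measurable_fun setT (fun w => Num.max (eta - Y w) 0).
Proof. by move=> mY; apply/measurable_EFinP; exact: mes_g. Qed.

Lemma int_abs_fin (Y : T -> R) (f : T -> R) : P.-integrable setT (fun w => (Y w)%:E) ->
  measurable_fun setT f -> (forall w, 0 <= f w <= `|Y w|) ->
  (\int[P]_w (f w)%:E)%E \is a fin_num.
Proof.
move=> hY mf hf.
have [mY hfin] := integrableP _ _ _ hY.
rewrite ge0_fin_numE; last by apply: integral_ge0 => w _; rewrite lee_fin; case/andP: (hf w).
apply: le_lt_trans hfin.
apply: ge0_le_integral => //.
- by move=> w _; rewrite lee_fin; case/andP: (hf w).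
- exact/measurable_EFinP.
- exact: (measurable_int _ (integrable_abse hY)).
- by move=> w _ /=; rewrite lee_fin; case/andP: (hf w).
Qed.

Lemma cvar_fin (Y : T -> R) (alpha : R) : 0 < alpha <= 1 ->
  P.-integrable setT (fun w => (Y w)%:E) -> CVaR P alpha Y \is a fin_num.
Proof.
move=> /andP[a0 a1] hY.
have mY : measurable_fun setT Y by apply/measurable_EFinP; exact: measurable_int hY.
have Ig0 eta : (0 <= \int[P]_w (Num.max (eta - Y w) 0)%:E)%E.
  by apply: integral_ge0 => w _; rewrite lee_fin le_max lexx orbT.
have hK : (\int[P]_w (Num.max (Y w) 0)%:E)%E \is a fin_num.
  apply: (@int_abs_fin Y (fun w => Num.max (Y w) 0) hY (mes_pr mY)) => w; rewrite le_max lexx orbT /=.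
  by rewrite ge_max normr_ge0 ler_norm.
have hI0 : (\int[P]_w (Num.max (0 - Y w) 0)%:E)%E \is a fin_num.
  apply: (@int_abs_fin Y (fun w => Num.max (0 - Y w) 0) hY (mes_gr 0 mY)) => w; rewrite le_max lexx orbT /=.
  by rewrite ge_max normr_ge0 sub0r -normrN ler_norm.
have ainv1 : 1 <= alpha^-1 by rewrite invf_ge1.
rewrite fin_numElt; apply/andP; split.
  apply: (@lt_le_trans _ _ (0%:E - (alpha^-1)%:E * (\int[P]_w (Num.max (0 - Y w) 0)%:E))%E).
    rewrite -(fineK hI0) -EFinM -EFinB; exact: ltNyr.
  by apply: ereal_sup_ubound; exists 0.
apply: (@le_lt_trans _ _ (\int[P]_w (Num.max (Y w) 0)%:E)%E); last first.
  by rewrite -(fineK hK) ltry.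
apply/ereal_supP => _ [eta _ <-].
have := Ig0 eta.
have Hle : (eta%:E <= \int[P]_w (Num.max (eta - Y w) 0)%:E + \int[P]_w (Num.max (Y w) 0)%:E)%E.
  case: (leP eta 0) => heta.
    apply: (@le_trans _ _ 0%E); first by rewrite lee_fin.
    apply: adde_ge0 => //; apply: integral_ge0 => w _; rewrite lee_fin le_max lexx orbT //.
  rewrite -ge0_integralD //; first last.
  - exact: mes_p.
  - by move=> w _; rewrite lee_fin le_max lexx orbT.
  - exact: mes_g.
  - by move=> w _; rewrite lee_fin le_max lexx orbT.
  apply: (@le_trans _ _ (\int[P]_w (cst eta%:E w))%E).
    rewrite integral_cst // [X in (_ * X)%E](_ : _ = 1%E) ?mule1 //; exact: probability_setT.
  apply: ge0_le_integral => //.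
  - by move=> w _; rewrite lee_fin ltW.
  - by apply: emeasurable_funD; [exact: mes_g | exact: mes_p].
  - move=> w _; rewrite /= -EFinD lee_fin.
    have h1 : eta - Y w <= Num.max (eta - Y w) 0 by rewrite le_max lexx.
    have h2 : Y w <= Num.max (Y w) 0 by rewrite le_max lexx.
    have h3 : 0 <= Num.max (eta - Y w) 0 by rewrite le_max lexx orbT.
    lra.
move: Hle.
case: (\int[P]_w (Num.max (eta - Y w) 0)%:E)%E => [i| |] //.
  rewrite -(fineK hK) -EFinD !lee_fin => Hle i0.
  have : i <= alpha^-1 * i by apply: ler_peMl.
  lra.
move=> _ _; rewrite gt0_muley ?lte_fin ?invr_gt0 //.
by rewrite /= leNye.
Qed.

Lemma cvar_le (Y Z : T -> R) (alpha : R) : 0 < alpha ->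
  measurable_fun setT Y -> measurable_fun setT Z -> (forall w, Y w <= Z w) ->
  (CVaR P alpha Y <= CVaR P alpha Z)%E.
Proof.
move=> a0 mY mZ hYZ.
apply/ereal_supP => _ [eta _ <-].
apply: le_trans; last by apply: ereal_sup_ubound; exists eta.
apply: leeB => //; apply: lee_wpmul2l; first by rewrite lee_fin invr_ge0 ltW.
apply: ge0_le_integral => //.
- by move=> w _; rewrite lee_fin le_max lexx orbT.
- exact: mes_g.
- exact: mes_g.
- move=> w _; rewrite lee_fin; apply: le_max2 => //; exact: lerB.
Qed.

End Aux.

Theorem proposition2 (d : measure_display) (T : measurableType d) (R : realType)
  (P : probability T R) (n : nat) (sigma : {set 'I_n} -> T -> R)
  (sigma_mono : forall (w : T) (A B : {set 'I_n}), A \subset B -> sigma A w <= sigma B w)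
  (sigma_submod : forall (w : T) (A B : {set 'I_n}),
      sigma (A :|: B) w + sigma (A :&: B) w <= sigma A w + sigma B w)
  (sigma_int : forall A : {set 'I_n}, P.-integrable setT (fun w => (sigma A w)%:E))
  (calX : {set {set 'I_n}}) (alpha : R) (halpha : 0 < alpha <= 1)
  (xbar : {set 'I_n}) (hxbar : xbar \in calX)
  (j : 'I_#|~: xbar| -> 'I_n) (j_inj : injective j) (j_out : forall i, j i \notin xbar)
  (x : {set 'I_n}) (hx : x \in calX) (psi : R)
  (hpsi : (psi%:E <= CVaR P alpha (sigma x))%E) :
  (psi%:E <= CVaR P alpha (sigma xbar) +
     \sum_(i < #|~: xbar|)
        ((CVaR P alpha (sigma (xbar_up j i)) - CVaR P alpha (sigma xbar))
           * ((j i \in x)%:R)%:E))%E.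
Proof.
have a0 : 0 < alpha by case/andP: halpha.
have mS A : measurable_fun setT (sigma A).
  by apply/measurable_EFinP; exact: measurable_int (sigma_int A).
have fin A : CVaR P alpha (sigma A) \is a fin_num by apply: cvar_fin.
pose f A := fine (CVaR P alpha (sigma A)).
have E A : CVaR P alpha (sigma A) = (f A)%:E by rewrite /f fineK.
have mono (A B : {set 'I_n}) : A \subset B -> f A <= f B.
  move=> AB; rewrite -lee_fin -!E; apply: cvar_le => // w; exact: sigma_mono.
rewrite E in hpsi.
under eq_bigr => i _ do rewrite !E -EFinB -EFinM.
rewrite E sumEFin -EFinD lee_fin.
move: hpsi; rewrite lee_fin => hpsi.
have sub_up (i : 'I_#|~: xbar|) : xbar \subset xbar_up j i.
  apply/fintype.subsetP => k kx; rewrite /xbar_up finset.in_setD finset.in_setT andbT.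
  apply/finset.imsetP => -[l _ kE]; move: (j_out l); by rewrite -kE kx.
have tnn i : 0 <= (f (xbar_up j i) - f xbar) * (j i \in x)%:R.
  by rewrite mulr_ge0 // subr_ge0 mono.
case: (pickP (fun i => j i \in x)) => [i0 Hi0 | Hnone].
  case: (@arg_maxnP _ i0 (fun i => j i \in x) (fun i : 'I_#|~: xbar| => nat_of_ord i) Hi0) => im Him Hmax.
  have xsub : x \subset xbar_up j im.
    apply/fintype.subsetP => k kx; rewrite /xbar_up finset.in_setD finset.in_setT andbT.
    apply/finset.imsetP => -[l]; rewrite inE => liml kE.
    have := Hmax l; rewrite /= -kE kx => /(_ isT); rewrite leqNgt liml.
    by [].
  apply: (le_trans hpsi); apply: (le_trans (mono _ _ xsub)).
  rewrite (bigD1 im) //= Him mulr1.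
  have : 0 <= \sum_(i < #|~: xbar| | i != im)
      (f (xbar_up j i) - f xbar) * (j i \in x)%:R by apply: sumr_ge0.
  lra.
rewrite big1 ?addr0; last by move=> i _; have := Hnone i; move=> /= ->; rewrite mulr0.
have eqI : (j @: [set: 'I_#|~: xbar|] = ~: xbar)%SET.
  apply/eqP; rewrite eqEcard; apply/andP; split.
    by apply/fintype.subsetP => _ /finset.imsetP[i _ ->]; rewrite inE j_out.
  by rewrite card_imset // cardsT card_ord.
have xsub : x \subset xbar.
  apply/fintype.subsetP => k kx; apply/negPn/negP => kn.
  have : k \in ~: xbar by rewrite inE kn.
  rewrite -eqI => /finset.imsetP[i _ kE]; have := Hnone i; by rewrite /= -kE kx.
by apply: (le_trans hpsi); apply: mono.
Qed.
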